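(* Let $T=K_2$ (the tree on $n=2$ vertices) and $k\ge2$, and let $M$ be the order-$k$ Steiner distance hypermatrix of $T$. If $\det(M)\neq0$, then $\det(M)<0$, i.e., $\operatorname{sgn}(\det(M))=(-1)^{n-1}=-1$.
   Context: For $K_2$ with vertices $1,2$, the order-$k$ Steiner distance hypermatrix $M$ has $(i_1,\dots,i_k)$ entry equal to $0$ if $i_1=\dots=i_k$ and $1$ otherwise (the Steiner distance of a vertex set is the minimum number of edges of a connected subgraph containing it). $\det$ denotes the hyperdeterminant of a symmetric hypermatrix: the unique irreducible polynomial in the entries, normalized so that the identity hypermatrix has value $1$, vanishing exactly when $\sum_{i_2,\dots,i_k}M_{a i_2\cdots i_k}x_{i_2}\cdots x_{i_k}=0$ for all $a$ has a nonzero complex solution. *)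

(* Defs.v *)
From HB Require Import structures.
From mathcomp Require Import all_boot all_order all_algebra.
Set Implicit Arguments. Unset Strict Implicit. Unset Printing Implicit Defensive.
Import Order.TTheory GRing.Theory Num.Theory.
Local Open Scope ring_scope.

(* Hypermatrices of dimension 2 (vertex set 'I_2 = {1,2} of K_2): an entry
   function on index sequences; an order-k hypermatrix is read on sequences
   of length k. *)
Definition hmat (R : Type) := seq 'I_2 -> R.

(* Steiner distance in K_2 (vertices ord0, ord_max, one edge):
   a vertex set with at most one vertex is spanned by 0 edges,
   the whole vertex set needs the single edge. *)
Definition steinerK2 (S : {set 'I_2}) : nat :=
  if (#|S| <= 1)%N then 0%N else 1%N.

Definition steinerHmatK2 : hmat int := fun s => (steinerK2 [set x in s])%:Z.

(* Coefficient of x_1^(k-1-i) x_2^i in the form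
   f_a(x) = sum_{i_2..i_k} M_{a i_2 .. i_k} x_{i_2} ... x_{i_k}. *)
Definition hcoef (R : comNzRingType) (k : nat) (M : hmat R) (a : 'I_2) (i : nat) : R :=
  \sum_(t : (k.-1).-tuple 'I_2 | count_mem ord_max t == i) M (a :: t).

(* Sylvester matrix of two binary forms of (formal) degree d, given by their
   coefficient lists a_0..a_d and b_0..b_d (a_i = coeff of x1^(d-i) x2^i). *)
Definition sylvesterForms (R : comNzRingType) (d : nat) (a b : nat -> R) : 'M[R]_(d + d) :=
  \matrix_(r, c)
    match split r with
    | inl i => if (i <= c <= i + d)%N then a (c - i)%N else 0
    | inr j => if (j <= c <= j + d)%N then b (c - j)%N else 0
    end.

(* Hyperdeterminant of an order-k, dimension-2 symmetric hypermatrix: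
   the resultant of the binary forms f_1, f_2 of degree k-1
   (normalized so that the identity hypermatrix has value 1). *)
Definition hdet2 (R : comNzRingType) (k : nat) (M : hmat R) : R :=
  \det (sylvesterForms (k.-1) (hcoef k M ord0) (hcoef k M ord_max)).

(* Main.v *)
Require Import Defs.
From mathcomp Require Import all_boot all_order all_algebra all_field.
From Stdlib Require Import Lia.
From mathcomp Require Import zify ring.
Import Order.TTheory GRing.Theory Num.Theory.
Local Open Scope ring_scope.


Lemma split_l m n (i : 'I_m) : split (lshift n i) = inl i.
Proof. exact: (unsplitK (inl _ i)). Qed.
Lemma split_r m n (i : 'I_n) : split (rshift m i) = inr i.
Proof. exact: (unsplitK (inr _ i)). Qed.

Lemma band_sum (R : comNzRingType) d (a : nat -> R) (i : nat) (x : R) :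
  (i < d)%N ->
  \sum_(c < d + d) (if (i <= c <= i + d)%N then a (c - i)%N else 0) * x ^+ c
  = x ^+ i * \sum_(j < d.+1) a j * x ^+ j.
Proof.
move=> lt_id.
rewrite -(big_mkord xpredT (fun c => (if (i <= c <= i + d)%N then a (c - i)%N else 0) * x ^+ c)).
rewrite (@big_cat_nat _ _ _ i) //=; last by lia.
rewrite (@big_cat_nat _ _ _ (i + d.+1) i) //=; [|lia|lia].
rewrite [X in X + _]big1_seq ?add0r; last first.
  move=> c /andP[_]; rewrite mem_index_iota => /andP[_ h].
  by rewrite leqNgt h /= mul0r.
rewrite [X in _ + X]big1_seq ?addr0; last first.
  move=> c /andP[_]; rewrite mem_index_iota => /andP[h _].
  have -> : (c <= i + d)%N = false by lia.
  by rewrite andbF mul0r.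
rewrite -{1}(add0n i) big_addn addnC addnK big_mkord mulr_sumr.
apply: eq_bigr => j _.
have -> : (i <= j + i <= i + d)%N by case: j => j /= hj; lia.
rewrite addnK exprD; ring.
Qed.

Lemma det_swapP (R : comNzRingType) n :
  \det (block_mx 0 1%:M 1%:M 0 : 'M[R]_(n + n)) = (-1) ^+ n.
Proof.
have E : (block_mx 0 1%:M 1%:M 0 : 'M[R]_(n + n)) *m block_mx 1%:M 1%:M 0 1%:M
   *m block_mx 1%:M 0 (-1%:M) 1%:M = block_mx (-1%:M) 1%:M 0 1%:M.
  rewrite !mulmx_block !(mulmx0, mul0mx, mulmx1, mul1mx, addr0, add0r, mulmxN).
  by rewrite addrN.
have := congr1 determinant E.
rewrite !det_mulmx det_ublock det_lblock det_ublock !det1 -(raddfN (@scalar_mx R n)) det_scalar.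
rewrite !(mulr1, mul1r) => ->. by [].
Qed.

Lemma det_anti (R : comNzRingType) n (B C D : 'M[R]_n) :
  \det (block_mx 0 B C D) = (-1) ^+ n * \det B * \det C.
Proof.
have -> : block_mx 0 B C D = block_mx B 0 D C *m block_mx 0 1%:M 1%:M 0.
  by rewrite mulmx_block !mulmx0 !mulmx1 !addr0 !add0r.
by rewrite det_mulmx det_lblock det_swapP mulrC mulrA.
Qed.

Lemma syl_det (R : fieldType) d (a b : nat -> R) (al : 'I_d -> R) :
  a d = 1 -> injective al ->
  (forall m, \sum_(j < d.+1) a j * al m ^+ j = 0) ->
  \det (sylvesterForms d a b) =
    (-1) ^+ d * \prod_(m < d) \sum_(j < d.+1) b j * al m ^+ j.
Proof.
move=> ad1 inj_al Froot.
set S := sylvesterForms d a b.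
pose G m := \sum_(j < d.+1) b j * al m ^+ j.
pose V : 'M[R]_(d + d, d) := \matrix_(c, m) al m ^+ c.
pose Vt : 'M[R]_d := Vandermonde d (\row_m al m).
pose Y : 'M[R]_d := Vt *m diag_mx (\row_m G m).
pose W : 'M[R]_(d + d) := row_mx (col_mx 0 1%:M) V.
have SV : S *m V = col_mx 0 Y.
  apply/matrixP => r m.
  case: (split_ordP r) => i ->; rewrite ?col_mxEu ?col_mxEd.
    rewrite !mxE; under eq_bigr do rewrite !mxE split_l.
    by rewrite (band_sum _ _ _ _ _ (ltn_ord i)) Froot mulr0.
  rewrite /Y mul_mx_diag [LHS]mxE; under eq_bigr do rewrite !mxE split_r.
  by rewrite (band_sum _ _ _ _ _ (ltn_ord i)) !mxE.
have SE : S *m col_mx 0 1%:M = rsubmx S.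
  by rewrite -[S in LHS]hsubmxK mul_row_col mulmx0 mulmx1 add0r.
have SW : S *m W = block_mx (usubmx (rsubmx S)) 0 (dsubmx (rsubmx S)) Y.
  by rewrite mul_mx_row SE SV block_mxEh vsubmxK.
have detL : \det (usubmx (rsubmx S)) = 1.
  rewrite det_trig; last first.
    apply/is_trig_mxP => i j lt_ij; rewrite !mxE split_l.
    have -> : (i <= d + j <= i + d)%N = false by lia.
    by [].
  rewrite big1 // => i _; rewrite !mxE split_l.
  have -> : (i <= d + i <= i + d)%N by lia.
  by rewrite addnK.
have detY : \det Y = \det Vt * \prod_(m < d) G m.
  by rewrite det_mulmx det_diag; congr (_ * _); apply: eq_bigr => m _; rewrite mxE.
have detW : \det W = (-1) ^+ d * \det Vt.
  rewrite /W -[V]vsubmxK -block_mxEh det_anti det1 mulr1.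
  congr (_ * \det _); apply/matrixP => c m; rewrite !mxE.
  by [].
have Vt0 : \det Vt != 0.
  rewrite det_Vandermonde; apply/prodf_neq0 => i _; apply/prodf_neq0 => j lt_ij.
  rewrite !mxE subr_eq0; apply/negP => /eqP /inj_al ji.
  by move: lt_ij; rewrite ji ltnn.
have := congr1 determinant SW.
rewrite det_mulmx det_lblock detL mul1r detY detW => H.
have H2 : \det S * (-1) ^+ d = \prod_(m < d) G m.
  apply: (mulIf Vt0); rewrite [RHS]mulrC -H; ring.
rewrite -H2 mulrCA -expr2 -exprM mulnC exprM sqrrN !expr1n mulr1.
by [].
Qed.

Definition tupOf d (A : {set 'I_d}) : d.-tuple 'I_2 :=
  [tuple (if j \in A then ord_max else ord0) | j < d].
Definition setOf d (t : d.-tuple 'I_2) : {set 'I_d} := [set j | tnth t j == ord_max].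

Arguments tupOf {d}. Arguments setOf {d}.
Lemma I2_cases (x : 'I_2) : x = ord0 \/ x = ord_max.
Proof. case: x => [[|[|n]] h] //; [left|right]; exact: val_inj. Qed.

Lemma tupOf_bij d : bijective (@tupOf d).
Proof.
exists (@setOf d) => [A|t].
  by apply/setP => j; rewrite inE tnth_mktuple; case: (j \in A).
apply: eq_from_tnth => j; rewrite tnth_mktuple inE.
by case: (I2_cases (tnth t j)) => ->.
Qed.

Lemma count_tupOf d (A : {set 'I_d}) : (count_mem ord_max (tupOf A))%N = #|A|.
Proof.
rewrite /tupOf /= count_map cardE /enum_mem size_filter.
rewrite count_filter; apply: eq_count => j /=.
by rewrite andbT; case: (j \in A).
Qed.

Lemma card_count d i :
  #|[pred t : d.-tuple 'I_2 | count_mem ord_max t == i]| = 'C(d, i).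
Proof.
have := card_draws ('I_d) i; rewrite card_ord => <-.
rewrite -!sum1_card (reindex (@tupOf d)).
  by apply: eq_bigl => A; rewrite !inE count_tupOf.
by apply: onW_bij; apply: tupOf_bij.
Qed.

Lemma card_le1 (s : seq 'I_2) :
  (#|[set x in s]| <= 1)%N = ~~ ((ord0 \in s) && (ord_max \in s)).
Proof.
case: (boolP (ord0 \in s)) => h0; case: (boolP (ord_max \in s)) => h1 /=.
- apply/negbTE; rewrite -ltnNge.
  apply: (@leq_trans #|[set (ord0 : 'I_2); ord_max]|); first by rewrite cards2.
  apply: subset_leq_card; apply/subsetP => x; rewrite !inE.
  by case/orP => /eqP ->.
- apply: (@leq_trans #|[set (ord0 : 'I_2)]|); last by rewrite cards1.
  apply: subset_leq_card; apply/subsetP => x; rewrite !inE.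
  by case: (I2_cases x) => -> // h; rewrite h in h1.
- apply: (@leq_trans #|[set (ord_max : 'I_2)]|); last by rewrite cards1.
  apply: subset_leq_card; apply/subsetP => x; rewrite !inE.
  by case: (I2_cases x) => -> // h; rewrite h in h0.
- apply: (@leq_trans #|[set (ord_max : 'I_2)]|); last by rewrite cards1.
  apply: subset_leq_card; apply/subsetP => x; rewrite !inE.
  by case: (I2_cases x) => -> // h; rewrite h in h0.
Qed.

Lemma M0 (t : seq 'I_2) : steinerHmatK2 (ord0 :: t) = (ord_max \in t : nat)%:Z.
Proof.
rewrite /steinerHmatK2 /steinerK2 card_le1 in_cons eqxx /= in_cons.
by case: (ord_max \in t).
Qed.

Lemma Mmax (t : seq 'I_2) : steinerHmatK2 (ord_max :: t) = (ord0 \in t : nat)%:Z.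
Proof.
rewrite /steinerHmatK2 /steinerK2 card_le1 !in_cons eqxx /= andbT.
by case: (ord0 \in t).
Qed.

Lemma hcoef0 d i : hcoef d.+1 steinerHmatK2 ord0 i = ('C(d, i) * (0 < i))%:Z.
Proof.
rewrite /hcoef /=.
rewrite (eq_bigr (fun _ => ((0 < i)%N : nat)%:Z)); last first.
  by move=> t /eqP ci; rewrite M0 -has_pred1 has_count ci.
rewrite sumr_const card_count.
by rewrite -mulr_natr -!natz -natrM mulnC.
Qed.

Lemma hcoefmax d i : hcoef d.+1 steinerHmatK2 ord_max i = ('C(d, i) * (i < d))%:Z.
Proof.
rewrite /hcoef /=.
rewrite (eq_bigr (fun _ => ((i < d)%N : nat)%:Z)); last first.
  move=> t /eqP ci; rewrite Mmax -has_pred1 has_count.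
  have := count_predC (pred1 ord_max) t; rewrite size_tuple ci.
  have -> : count (predC (pred1 ord_max)) t = count (pred1 ord0) t.
    by apply: eq_count => x /=; case: (I2_cases x) => ->.
  move=> E; have -> : (0 < count_mem ord0 t)%N = (i < d)%N by lia.
  by [].

rewrite sumr_const card_count.
by rewrite -mulr_natr -!natz -natrM mulnC.
Qed.

Lemma sign_prod (C : numClosedFieldType) d (w : C) : (0 < d)%N -> d.-primitive_root w ->
  (-1) ^+ d * \prod_(m < d) (1 - (w ^+ m - 1) ^+ d) <= 0.
Proof.
move=> d0 pw.
pose h := fun m : nat => 1 - (w ^+ m - 1) ^+ d.
rewrite -(big_mkord xpredT h).
have wd : w ^+ d = 1 := prim_expr_order pw.
have w0 : w != 0.
  apply/eqP => w0; move: wd; rewrite w0 expr0n; have -> : (d == 0%N) = false by case: (d) d0.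
  by move/eqP; rewrite eq_sym oner_eq0.
have nw : w * w^* = 1.
  rewrite -normCK; have := normr_ge0 w => n0.
  have : `|w| ^+ d == 1 by rewrite -normrX wd normr1.
  by rewrite pexpr_eq1 // => /eqP ->; rewrite expr1n.
have conj_w m : (m <= d)%N -> (w ^+ m)^* = w ^+ (d - m).
  move=> md; apply: (@mulIf _ (w ^+ m)); first by rewrite expf_neq0.
  rewrite -exprD subnK // wd rmorphXn -exprMn mulrC nw expr1n.
  by [].
have hc m : (m <= d)%N -> (h m)^* = h (d - m)%N.
  by move=> md; rewrite /h rmorphB rmorph1 rmorphXn rmorphB rmorph1 -conj_w.

rewrite big_ltn // {1}/h expr0 subrr expr0n.
have -> : (d == 0%N) = false by case: (d) d0.
rewrite subr0 mul1r.
rewrite (bigID (fun m => (2 * m < d)%N)) /=.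
rewrite [\prod_(1 <= i < d | ~~ _) h i](bigID (fun m => (2 * m == d)%N)) /=.
set A := \prod_(1 <= m < d | (2 * m < d)%N) h m.
have -> : \prod_(1 <= i < d | ~~ (2 * i < d)%N && (2 * i != d)%N) h i = A^*.
  rewrite big_nat_rev rmorph_prod; apply: congr_big_nat => // m.
    move=> /andP[m1 md].
    have -> : (1 + d - m.+1 = d - m)%N by lia.
    apply/idP/idP => H; lia.
  move=> /andP[_ /andP[m1 md]].
  have -> : (1 + d - m.+1 = d - m)%N by lia.
  by rewrite -(hc m) // ltnW.
have dE : d = (odd d + 2 * d./2)%N by rewrite mul2n odd_double_half.
case: (boolP (odd d)) => od.
- rewrite big1; last by move=> m /andP[_ /eqP H]; rewrite od in dE; lia.
  rewrite -signr_odd od expr1 mul1r mulN1r oppr_le0.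
  exact: mul_conjC_ge0.
- rewrite (negbTE od) in dE.
  rewrite (@congr_big_nat _ _ _ 1 d 1 d _ (fun m => m == d./2) h h) //; last first.
    move=> m /andP[m1 md]; apply/idP/idP => H; lia.
  rewrite big_nat1_eq.
  have -> : (1 <= d./2 < d)%N by lia.
  have wh : w ^+ d./2 = -1.
    have : (w ^+ d./2) ^+ 2 == 1 by rewrite -exprM (_ : (d./2 * 2 = d)%N) ?wd //; lia.
    rewrite sqrf_eq1 => /orP[|/eqP //].
    rewrite -(expr0 w) (eq_prim_root_expr pw) mod0n modn_small; last by lia.
    move=> /eqP H; lia.
  rewrite /h wh -signr_odd (negbTE od) expr0 mul1r mulrCA.
  apply: mulr_le0_ge0; last exact: mul_conjC_ge0.
  rewrite -opprD exprNn -signr_odd (negbTE od) expr0 mul1r subr_le0.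
  by apply: exprn_ege1; rewrite lerDl ler01.
Qed.

Lemma map_syl (R S : comNzRingType) (f : R -> S) d (a b : nat -> R) :
  f 0 = 0 ->
  map_mx f (sylvesterForms d a b) = sylvesterForms d (fun j => f (a j)) (fun j => f (b j)).
Proof.
move=> f0; apply/matrixP => r c; rewrite !mxE.
by case: (split r) => i; case: ifP.
Qed.

Lemma binsum0 (R : comNzRingType) d (y : R) :
  \sum_(j < d.+1) ((('C(d, j) * (0 < j))%N)%:Z)%:~R * y ^+ j = (1 + y) ^+ d - 1.
Proof.
rewrite exprDn big_ord_recl [in RHS]big_ord_recl /= muln0 mul0r add0r.
rewrite expr0 mulr1 expr1n bin0 addrC addKr.
apply: eq_bigr => j _; rewrite muln1 expr1n mul1r mulr_natl.
by [].
Qed.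

Lemma binsum1 (R : comNzRingType) d (y : R) :
  \sum_(j < d.+1) ((('C(d, j) * (j < d))%N)%:Z)%:~R * y ^+ j = (1 + y) ^+ d - y ^+ d.
Proof.
rewrite exprDn big_ord_recr [in RHS]big_ord_recr /= ltnn muln0 mul0r addr0.
rewrite subnn expr0 mul1r binn addrK.
apply: eq_bigr => j _; rewrite ltn_ord muln1 expr1n mul1r mulr_natl.
by [].
Qed.

Theorem mainTheorem9 (k : nat) (hk : (2 <= k)%N) :
  hdet2 k steinerHmatK2 != 0 -> hdet2 k steinerHmatK2 < 0.
Proof.
case: k hk => [|d] // hk.
have d0 : (0 < d)%N by [].
move=> nz.
have [w pw] := C_prim_root_exists d0.
have wd : w ^+ d = 1 := prim_expr_order pw.
rewrite -(@ltrz0 algC) lt_neqAle intr_eq0 nz /=.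
rewrite /hdet2 /= -det_map_mx map_syl ?rmorph0 //.
rewrite (@syl_det _ _ _ _ (fun m : 'I_d => w ^+ m - 1)).
- rewrite (_ : \prod_(m < d) _ = \prod_(m < d) (1 - (w ^+ m - 1) ^+ d)).
    exact: sign_prod.
  apply: eq_bigr => m _.
  under eq_bigr do rewrite hcoefmax.
  by rewrite binsum1 [1 + _]addrC subrK exprAC wd expr1n.
- by rewrite hcoef0 binn d0.
- move=> i j /= /addIr /eqP; rewrite (eq_prim_root_expr pw) !modn_small //.
  by move=> /eqP /val_inj.
- move=> m; under eq_bigr do rewrite hcoef0.
  by rewrite binsum0 [1 + _]addrC subrK exprAC wd expr1n subrr.
Qed.
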